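(* Let $d\ge 1$ and $n$ be integers with $n\le d+1$, let $r>0$, let $B\subset\mathbb{R}^d$ be the closed Euclidean ball of radius $r$ centered at the origin, and let $S=\partial B$ be its boundary sphere. Consider the maximization of $E(\mathrm{MST}(X))$ over all point sets $X\subset B$ of cardinality $n$. The maximum is attained when the points of $X$ lie on $S$, at the vertices of a regular $(n-1)$-simplex that has $S$ as its smallest circumscribing sphere.
   Context: For a finite set $Z\subset\mathbb{R}^d$, a spanning tree of $Z$ is a connected acyclic undirected graph with vertex set $Z$; its length is $E(G)=\sum_{(z,z')\text{ edge of }G}\|z-z'\|_2$. $E(\mathrm{MST}(Z))$ denotes the minimum of $E(G)$ over all spanning trees $G$ of $Z$ (the length of a minimum spanning tree). A $k$-simplex is the convex hull of $k+1$ affinely independent points; it is regular if all pairwise distances between its vertices are equal. *)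

(* Defs.v *)
From HB Require Import structures.
From mathcomp Require Import all_boot all_order all_algebra.
From mathcomp Require Import boolp reals constructive_ereal.
Set Implicit Arguments.
Unset Strict Implicit.
Unset Printing Implicit Defensive.
Import Order.TTheory GRing.Theory Num.Theory.
Local Open Scope ring_scope.

Definition enorm (R : realType) (d : nat) (v : 'rV[R]_d) : R :=
  Num.sqrt (\sum_(i < d) (v ord0 i) ^+ 2).

Definition edist (R : realType) (d : nat) (x y : 'rV[R]_d) : R := enorm (x - y).

(* A graph on the vertex set 'I_n (the indices of the points) is given by a set
   of ordered pairs; we require it to be symmetric and irreflexive (simple
   undirected graph). *)
Definition adj (n : nat) (G : {set 'I_n * 'I_n}) : rel 'I_n :=
  fun i j => (i, j) \in G.

Definition simple_graph (n : nat) (G : {set 'I_n * 'I_n}) : Prop :=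
  (forall i, ~~ adj G i i) /\ (forall i j, adj G i j = adj G j i).

Definition graph_connected (n : nat) (G : {set 'I_n * 'I_n}) : Prop :=
  forall i j, connect (adj G) i j.

Definition graph_acyclic (n : nat) (G : {set 'I_n * 'I_n}) : Prop :=
  forall s : seq 'I_n, uniq s -> (3 <= size s)%N -> ~~ cycle (adj G) s.

Definition spanning_tree (n : nat) (G : {set 'I_n * 'I_n}) : Prop :=
  simple_graph G /\ graph_connected G /\ graph_acyclic G.

(* length of a graph: each undirected edge {i,j} counted once (i < j) *)
Definition graph_length (R : realType) (d n : nat) (X : 'I_n -> 'rV[R]_d)
    (G : {set 'I_n * 'I_n}) : R :=
  \sum_(p in G | (p.1 < p.2)%N) edist (X p.1) (X p.2).

(* E(MST(X)): minimum of the length over all spanning trees, as an extended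
   real (+oo if there is no spanning tree). *)
Definition mst_length (R : realType) (d n : nat) (X : 'I_n -> 'rV[R]_d)
    : \bar R :=
  \big[Order.min/+oo%E]_(G : {set 'I_n * 'I_n} | `[< spanning_tree G >])
     (graph_length X G)%:E.

Definition affinely_independent (R : realType) (d n : nat)
    (Y : 'I_n -> 'rV[R]_d) : Prop :=
  forall c : 'I_n -> R,
    \sum_i c i = 0 -> \sum_i c i *: Y i = 0 -> forall i, c i = 0.

Definition regular_simplex (R : realType) (d n : nat)
    (Y : 'I_n -> 'rV[R]_d) : Prop :=
  affinely_independent Y /\
  (forall i j k l, i != j -> k != l -> edist (Y i) (Y j) = edist (Y k) (Y l)).

Definition smallest_circumsphere (R : realType) (d n : nat) (r : R)
    (Y : 'I_n -> 'rV[R]_d) : Prop :=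
  (forall i, enorm (Y i) = r) /\
  (forall (c : 'rV[R]_d) (rho : R), (forall i, edist (Y i) c = rho) -> r <= rho).

(* Main.v *)
Require Import Defs.
From HB Require Import structures.
From mathcomp Require Import all_boot all_order all_algebra.
From mathcomp Require Import boolp reals constructive_ereal.
Import Order.TTheory GRing.Theory Num.Theory.

From mathcomp Require Import ring lra.
Set Implicit Arguments.
Unset Strict Implicit.
Unset Printing Implicit Defensive.


Lemma rank_fun (T : finType) (e : rel T) (x0 : T) :
  (forall x, connect e x x0) ->
  exists (f : T -> T) (h : T -> nat), forall v, v != x0 -> e v (f v) && (h (f v) < h v).
Proof.
move=> conn.
pose P v k := [exists t : k.-tuple T, path e v t && (last v t == x0)].
have ex v : exists k, P v k.
  have /connectP [p pp lp] := conn v.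
  exists (size p); apply/existsP; exists (in_tuple p) => /=.
  by rewrite pp -lp eqxx.
pose h v := ex_minn (ex v).
have step v : v != x0 -> exists w, e v w && (h w < h v).
  move=> nv; rewrite /h; case: (ex_minnP (ex v)) => k /existsP [t /andP [pt lt]] _.
  case: t pt lt => [[|w p] /= szt] pt lt.
    by rewrite (eqP lt) eqxx in nv.
  case/andP: pt => evw pp.
  exists w; rewrite evw /=.
  case: (ex_minnP (ex w)) => m _ Hm.
  have Pw : P w (size p).
    by apply/existsP; exists (in_tuple p) => /=; rewrite pp lt.
  by apply: leq_ltn_trans (Hm _ Pw) _; rewrite -(eqP szt).
exists (fun v => odflt v [pick w | e v w && (h w < h v)]), h => v nv.
case: pickP => [w //|none] /=.
by have [w Hw] := step v nv; rewrite none in Hw.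
Qed.

Lemma edges_count n (G : {set 'I_n * 'I_n}) (x0 : 'I_n) :
  simple_graph G -> graph_connected G ->
  (n.-1 <= #|[set p in G | (p.1 < p.2)%N]|)%N.
Proof.
move=> [irr sym] conn.
have [f [h Hf]] := rank_fun (fun x => conn x x0).
pose g (v : 'I_n) : 'I_n * 'I_n := if (v < f v)%N then (v, f v) else (f v, v).
have -> : n.-1 = #|[set~ x0]| by rewrite cardsC1 card_ord.
rewrite -(@card_in_imset _ _ g); last first.
  move=> v w; rewrite !inE => nv nw; rewrite /g.
  have /andP [_ hv] := Hf v nv; have /andP [_ hw] := Hf w nw.
  case: ifP => _; case: ifP => _ [] e1 e2 //.
  all: try (by apply: val_inj; rewrite /= e2).
  { by rewrite e2 in hv; rewrite -e1 in hw; move: (ltn_trans hv hw); rewrite ltnn. }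
  { by rewrite e1 in hv; rewrite -e2 in hw; move: (ltn_trans hv hw); rewrite ltnn. }
apply: subset_leq_card; apply/subsetP => p /imsetP [v]; rewrite !inE => nv ->.
have /andP [evf _] := Hf v nv.
have nvf : v != f v by apply: contraNneq (irr v) => {2}->.
rewrite /g; case: ifP => lt /=.
  by rewrite lt andbT.
have ltf : (f v < v)%N by rewrite ltn_neqAle leqNgt lt andbT eq_sym.
by rewrite ltf andbT; move: evf; rewrite sym.
Qed.

Definition star n (k : 'I_n) : {set 'I_n * 'I_n} :=
  [set p | ((p.1 == k) && (p.2 != k)) || ((p.2 == k) && (p.1 != k))].

Lemma adj_star n (k i j : 'I_n) :
  adj (star k) i j = ((i == k) && (j != k)) || ((j == k) && (i != k)).
Proof. by rewrite /adj inE. Qed.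

Lemma star_spanning n (k : 'I_n) : spanning_tree (star k).
Proof.
split; [split|split].
- by move=> i; rewrite adj_star; case: (i == k).
- by move=> i j; rewrite !adj_star orbC.
- have hk j : connect (adj (star k)) k j.
    case: (eqVneq j k) => [->|njk]; first exact: connect0.
    by apply: connect1; rewrite adj_star eqxx njk.
  move=> i j; case: (eqVneq i k) => [->|nik]; first exact: hk.
  apply: connect_trans (hk j); apply: connect1.
  by rewrite adj_star eqxx nik orbT.
- move=> [|x [|y [|z rest]]] //= Hu _.
  apply/negP => /and3P [a1 a2 a3].
  move: a1 a2; rewrite !adj_star.
  case: (eqVneq y k) => [eyk|nyk] /=; last first.
    rewrite !andbT orbF => /eqP exk /eqP ezk.
    by move: Hu; rewrite exk ezk !inE eqxx /= orbT.
  move=> /orP [/andP [_ //]|nxk] /orP [nzk|/andP [_ //]].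
  move: Hu; rewrite eyk !inE; case/and4P => _ nk _ _.
  case: rest a3 nk => [|w rest] /=.
    by rewrite adj_star (negbTE nxk) (negbTE nzk).
  rewrite adj_star (negbTE nzk) /= => /andP [/andP [/eqP -> _] _].
  by rewrite !inE eqxx orbT.
Qed.

Local Open Scope ring_scope.

Section Vec.
Variable R : realType.

Lemma sum_sqB (I : finType) (A : {pred I}) (a : I -> R) (b : R) :
  \sum_(j in A) (a j - b) ^+ 2 =
  \sum_(j in A) a j ^+ 2 - 2 * b * \sum_(j in A) a j + #|A|%:R * b ^+ 2.
Proof.
rewrite (eq_bigr (fun j => a j ^+ 2 + (- (2 * b)) * a j + b ^+ 2)); last first.
  by move=> j _; ring.
rewrite !big_split /= -mulr_sumr sumr_const -mulr_natl. ring.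
Qed.

Lemma sum_sqB_full (I : finType) (a : I -> R) (b : R) :
  \sum_j (a j - b) ^+ 2 =
  \sum_j a j ^+ 2 - 2 * b * \sum_j a j + #|I|%:R * b ^+ 2.
Proof.
rewrite (eq_bigr (fun j => a j ^+ 2 + (- (2 * b)) * a j + b ^+ 2)); last first.
  by move=> j _; ring.
rewrite !big_split /= -mulr_sumr sumr_const -mulr_natl. ring.
Qed.

Lemma cauchy_schwarz (I : finType) (A : {pred I}) (a : I -> R) :
  (\sum_(j in A) a j) ^+ 2 <= #|A|%:R * \sum_(j in A) a j ^+ 2.
Proof.
have H : 0 <= \sum_(i in A) \sum_(j in A) (a j - a i) ^+ 2.
  by apply: sumr_ge0 => i _; apply: sumr_ge0 => j _; exact: sqr_ge0.
move: H; rewrite (eq_bigr (fun i => \sum_(j in A) a j ^+ 2 - 2 * a i * \sum_(j in A) a j + #|A|%:R * a i ^+ 2)); last by move=> i _; rewrite sum_sqB.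
rewrite !big_split /= sumrN sumr_const -mulr_natl -mulr_sumr -!mulr_suml.
rewrite -mulr_sumr mulr1 -mulr_natr.
set Q := \sum_(j in A) a j ^+ 2; set S := \sum_(j in A) a j; set N := #|A|%:R.
nra.
Qed.

Lemma pair_scalar (I : finType) (a : I -> R) :
  \sum_k \sum_j (a j - a k) ^+ 2 <= 2 * #|I|%:R * \sum_j a j ^+ 2.
Proof.
rewrite (eq_bigr (fun k => \sum_j a j ^+ 2 - 2 * a k * \sum_j a j + #|I|%:R * a k ^+ 2)); last by move=> k _; rewrite sum_sqB_full.
rewrite !big_split /= sumrN sumr_const -mulr_natl -mulr_sumr -!mulr_suml.
rewrite -mulr_sumr mulr1 -mulr_natr.
set Q := \sum_j a j ^+ 2; set S := \sum_j a j; set N := #|I|%:R.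
nra.
Qed.

Definition sqn d (v : 'rV[R]_d) := \sum_(i < d) (v ord0 i) ^+ 2.

Lemma sqn_ge0 d (v : 'rV[R]_d) : 0 <= sqn v.
Proof. by apply: sumr_ge0 => i _; exact: sqr_ge0. Qed.

Lemma enorm_sqr d (v : 'rV[R]_d) : enorm v ^+ 2 = sqn v.
Proof. by rewrite /enorm sqr_sqrtr // sqn_ge0. Qed.

Lemma enorm_ge0 d (v : 'rV[R]_d) : 0 <= enorm v.
Proof. exact: sqrtr_ge0. Qed.

Lemma edist_sqr d (x y : 'rV[R]_d) : edist x y ^+ 2 = sqn (x - y).
Proof. exact: enorm_sqr. Qed.

Lemma sqnB d (x y : 'rV[R]_d) : sqn (x - y) = \sum_i (x ord0 i - y ord0 i) ^+ 2.
Proof. by apply: eq_bigr => i _; rewrite !mxE. Qed.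

Lemma edist_sym d (x y : 'rV[R]_d) : edist x y = edist y x.
Proof.
rewrite /edist /enorm; congr Num.sqrt; rewrite -/(sqn (x - y)) -/(sqn (y - x)).
by rewrite !sqnB; apply: eq_bigr => i _; ring.
Qed.

Lemma edist_xx d (x : 'rV[R]_d) : edist x x = 0.
Proof.
rewrite /edist /enorm -/(sqn (x - x)) sqnB big1 ?sqrtr0 // => i _.
by rewrite subrr expr0n.
Qed.

Lemma sqn_centered n d (Z : 'I_n -> 'rV[R]_d) (b : 'rV[R]_d) :
  (forall c, \sum_i Z i ord0 c = 0) ->
  \sum_j sqn (Z j - b) = \sum_j sqn (Z j) + n%:R * sqn b.
Proof.
move=> H.
under eq_bigr do rewrite sqnB.
rewrite exchange_big /=.
under eq_bigr => c _ do rewrite sum_sqB_full H mulr0 subr0 card_ord.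
rewrite big_split /= -mulr_sumr; congr (_ + _).
by rewrite /sqn exchange_big.
Qed.

Lemma pair_bound n d (X : 'I_n -> 'rV[R]_d) :
  \sum_k \sum_j sqn (X j - X k) <= 2 * n%:R * \sum_k sqn (X k).
Proof.
under eq_bigr do under eq_bigr do rewrite sqnB.
under eq_bigr do rewrite exchange_big /=.
rewrite exchange_big /= /sqn [in X in _ <= X]exchange_big mulr_sumr.
apply: ler_sum => c _.
by have := pair_scalar (fun k => X k ord0 c); rewrite card_ord.
Qed.

End Vec.

Section Reg.
Variable R : realType.

Lemma sqn0 d : sqn (0 : 'rV[R]_d) = 0.
Proof. by rewrite /sqn big1 // => i _; rewrite mxE expr0n. Qed.

Lemma centroid_sum n d (Y : 'I_n -> 'rV[R]_d) : (0 < n)%N ->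
  forall k, \sum_i (Y i - n%:R^-1 *: \sum_j Y j) ord0 k = 0.
Proof.
move=> n0 k.
under eq_bigr do rewrite !mxE summxE.
rewrite sumrB sumr_const card_ord -mulr_natl mulr1.
have nz : (n%:R : R) != 0 by rewrite pnatr_eq0 -lt0n.
by rewrite -[X in _ - X]mulr_natl mulrA mulfV // mul1r subrr.
Qed.

Lemma regular_centered n d (Y : 'I_n -> 'rV[R]_d) (D : R) : (0 < n)%N ->
  (forall i j, i != j -> sqn (Y i - Y j) = D) ->
  forall i, 2 * n%:R * sqn (Y i - n%:R^-1 *: \sum_j Y j) = (n.-1)%:R * D.
Proof.
move=> n0 HD.
set c := n%:R^-1 *: \sum_j Y j.
have HZ := centroid_sum Y n0.
set W := \sum_j sqn (Y j - c).
have E i : n%:R * sqn (Y i - c) = (n.-1)%:R * D - W.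
  have := @sqn_centered _ _ _ (fun j => Y j - c) (Y i - c) HZ.
  rewrite -/W.
  have -> : \sum_j sqn ((Y j - c) - (Y i - c)) = (n.-1)%:R * D.
    rewrite (bigD1 i) //= subrr sqn0 add0r.
    rewrite (eq_bigr (fun _ => D)); last first.
      move=> j nj; rewrite opprB addrA subrK; exact: HD.
    by rewrite sumr_const cardC1 card_ord mulr_natl.
  move=> ->; ring.
have nz : (n%:R : R) != 0 by rewrite pnatr_eq0 -lt0n.
have SW : \sum_(i < n) n%:R * sqn (Y i - c) = \sum_(i < n) ((n.-1)%:R * D - W).
  by apply: eq_bigr => i _; exact: E.
rewrite -mulr_sumr sumr_const card_ord -/W in SW.
have W2 : W = (n.-1)%:R * D - W.
  by apply: (mulfI nz); rewrite SW; exact/esym/mulr_natl.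
move=> i; rewrite -mulrA E; lra.
Qed.

End Reg.

Lemma sum_if_eq (R : realType) n (k : 'I_n) (F : 'I_n -> R) :
  \sum_i (if i == k then F i else 0) = F k.
Proof. by rewrite -big_mkcond big_pred1_eq. Qed.

Lemma star_length (R : realType) n d (X : 'I_n -> 'rV[R]_d) (k : 'I_n) :
  graph_length X (star k) = \sum_j edist (X k) (X j).
Proof.
rewrite /graph_length big_mkcond /=.
pose h i j := edist (X i) (X j).
pose g i j := if ((i, j) \in star k) && (i < j)%N then h i j else 0.
have -> : \sum_(p : 'I_n * 'I_n) (if (p \in star k) && (p.1 < p.2)%N
      then edist (X p.1) (X p.2) else 0) = \sum_i \sum_j g i j.
  by rewrite pair_big /=; apply: eq_bigr => -[i j] _.
have Hg i j : g i j + g j i = (if i == k then h i j else 0) + (if j == k then h i j else 0).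
  rewrite /g !inE /= /h.
  case: (eqVneq i k) => [->|nik]; case: (eqVneq j k) => [->|njk] /=.
  - by rewrite edist_xx !addr0.
  - case: (ltngtP k j) => [_|_|e].
    + by rewrite ?add0r ?addr0.
    + by rewrite ?add0r ?addr0 edist_sym.
    + by move: njk; rewrite (ord_inj e) eqxx.
  - case: (ltngtP i k) => [_|_|e].
    + by rewrite ?add0r ?addr0.
    + by rewrite ?add0r ?addr0 edist_sym.
    + by move: nik; rewrite (ord_inj e) eqxx.
  - by [].
have E2 : \sum_i \sum_j (g i j + g j i) = 2 * \sum_i \sum_j g i j.
  under eq_bigr do rewrite big_split /=.
  rewrite big_split /= [X in _ + X]exchange_big /=; lra.
have E3 : \sum_i \sum_j (g i j + g j i) = 2 * \sum_j edist (X k) (X j).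
  under eq_bigr do under eq_bigr do rewrite Hg.
  under eq_bigr do rewrite big_split /=.
  rewrite big_split /=.
  have -> : \sum_i \sum_j (if i == k then h i j else 0) = \sum_j h k j.
    rewrite -(sum_if_eq k (fun i => \sum_j h i j)); apply: eq_bigr => i _.
    by case: eqP => _ //; rewrite big1.
  have -> : \sum_i \sum_j (if j == k then h i j else 0) = \sum_j h k j.
    apply: eq_bigr => i _; rewrite (sum_if_eq k (fun j => h i j)).
    exact: edist_sym.
  rewrite /h; lra.
have nz : (2 : R) != 0 by rewrite pnatr_eq0.
by apply: (mulfI nz); rewrite -E2 E3.
Qed.

Section Ex.
Variable R : realType.

Lemma sum_trunc (d m : nat) (F : nat -> R) : (m <= d)%N ->
  (forall c, (m <= c)%N -> F c = 0) ->
  \sum_(c < d) F c = \sum_(c < m) F c.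
Proof.
move=> md H0.
rewrite -!(big_mkord xpredT) (big_cat_nat (leq0n m) md) /=.
rewrite [X in _ + X]big_nat_cond [X in _ + X]big1 ?addr0 // => c /andP [/andP [mc _] _].
exact: H0.
Qed.

Lemma sum_delta (m i : nat) : (i < m)%N ->
  \sum_(c < m) (if (c == i :> nat) then 1 else 0 : R) = 1.
Proof.
move=> im.
rewrite (bigD1 (Ordinal im)) //= eqxx big1 ?addr0 // => c nc.
case: eqP => // e; case/eqP: nc; exact: val_inj.
Qed.

Lemma sqnZ d (a : R) (v : 'rV[R]_d) : sqn (a *: v) = a ^+ 2 * sqn v.
Proof.
rewrite /sqn mulr_sumr; apply: eq_bigr => i _; rewrite mxE; ring.
Qed.

End Ex.

Lemma sqn_sym (R : realType) d (x y : 'rV[R]_d) : sqn (x - y) = sqn (y - x).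
Proof. by rewrite -!edist_sqr edist_sym. Qed.

Lemma raw_simplex (R : realType) (d n : nat) : (2 <= n)%N -> (n <= d.+1)%N ->
  exists V : 'I_n -> 'rV[R]_d,
    (forall i j, i != j -> sqn (V i - V j) = 2) /\
    (forall c : 'I_n -> R, \sum_i c i = 0 ->
        (forall k : 'I_d, \sum_i c i * V i ord0 k = 0) -> forall i, c i = 0).
Proof.
move=> n2 nd.
set m := n.-1.
have md : (m <= d)%N by rewrite /m -ltnS prednK // ltnW.
have m1 : (1 <= m)%N by rewrite /m -ltnS prednK // ltnW.
have mn : n = m.+1 by rewrite /m prednK // ltnW.
have mR : (0 : R) < m%:R by rewrite ltr0n.
have mz : (m%:R : R) != 0 by rewrite pnatr_eq0 -lt0n.
set q : R := Num.sqrt n%:R.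
have q2 : q ^+ 2 = m%:R + 1 by rewrite sqr_sqrtr ?ler0n // mn -addn1 natrD.
have q0 : 0 < q by rewrite sqrtr_gt0 ltr0n ltnW.
set t : R := (1 - q) / m%:R.
have mt : m%:R * t = 1 - q by rewrite /t mulrC -mulrA mulVf ?mulr1.
have ht : m%:R * t ^+ 2 - 2 * t - 1 = 0.
  have : m%:R * (m%:R * t ^+ 2 - 2 * t - 1) = 0.
    have -> : m%:R * (m%:R * t ^+ 2 - 2 * t - 1) = (m%:R * t) ^+ 2 - 2 * (m%:R * t) - m%:R by ring.
    rewrite mt; nra.
  by move/eqP; rewrite mulf_eq0 (negbTE mz) /= => /eqP.
pose v (i c : nat) : R := if i == m then (if (c < m)%N then t else 0)
                          else (if c == i then 1 else 0).
pose V (i : 'I_n) : 'rV[R]_d := \row_(c < d) v i c.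
have vz i c : (i <= m)%N -> (m <= c)%N -> v i c = 0.
  move=> im mc; rewrite /v; case: eqP => [_|nim]; first by rewrite ltnNge mc.
  have : (i < c)%N by apply: leq_trans mc; rewrite ltn_neqAle im andbT; apply/eqP.
  by rewrite ltn_neqAle eq_sym => /andP [/negbTE ->].
have im (i : 'I_n) : (i <= m)%N by rewrite -ltnS -mn.
have key (i j : 'I_n) : i != j -> (j : nat) != m -> sqn (V i - V j) = 2.
  move=> nij njm.
  rewrite sqnB; under eq_bigr do rewrite !mxE.
  rewrite (@sum_trunc _ d m (fun c : nat => (v i c - v j c) ^+ 2)) //; last first.
    by move=> c mc; rewrite !vz ?im // subrr expr0n.
  have jm : (j < m)%N by rewrite ltn_neqAle njm im.
  case: (eqVneq (i : nat) m) => [eim|nim].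
  - rewrite (eq_bigr (fun c : 'I_m => t ^+ 2 + (1 - 2 * t) * (if (c == j :> nat) then 1 else 0))); last first.
      by move=> c _; rewrite /v eim eqxx ltn_ord (negbTE njm); case: eqP => _; ring.
    rewrite big_split /= sumr_const card_ord -mulr_sumr sum_delta // -mulr_natl; lra.
  - have nij' : (i : nat) != j by [].
    have iml : (i < m)%N by rewrite ltn_neqAle nim im.
    rewrite (eq_bigr (fun c : 'I_m => (if (c == i :> nat) then 1 else 0) + (if (c == j :> nat) then 1 else 0))); last first.
      move=> c _; rewrite /v (negbTE nim) (negbTE njm).
      case: (eqVneq (c : nat) i) => ci; case: (eqVneq (c : nat) j) => cj; try ring.
      by move: nij'; rewrite -ci cj eqxx.
    by rewrite big_split /= !sum_delta.
have dist (i j : 'I_n) : i != j -> sqn (V i - V j) = 2.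
  move=> nij; case: (eqVneq (j : nat) m) => [ejm|njm]; last exact: key.
  have nim : (i : nat) != m.
    by apply: contra nij => /eqP eim; apply/eqP; apply: val_inj; rewrite /= ejm eim.
  by rewrite sqn_sym; apply: key => //; rewrite eq_sym.
exists V; split => //.
move=> c sc0 Hc.
have lastn : (m < n)%N by rewrite mn.
pose last : 'I_n := Ordinal lastn.
have cj (j : 'I_n) : j != last -> c j = - (t * c last).
  move=> njl.
  have njm : (j : nat) != m by [].
  have jm : (j < m)%N by rewrite ltn_neqAle njm im.
  pose kj : 'I_d := Ordinal (leq_trans jm md).
  have := Hc kj.
  rewrite (eq_bigr (fun i => (if i == last then c i * t else 0) + (if i == j then c i else 0))); last first.
    move=> i _; rewrite mxE /v /=.
    case: (eqVneq i last) => [->|nil]; first by rewrite /= eqxx jm eq_sym (negbTE njl) addr0.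
    have nim : (i : nat) != m by [].
    rewrite (negbTE nim) add0r.
    case: (eqVneq i j) => [->|nij]; first by rewrite eqxx mulr1.
    have : (j : nat) != i by rewrite eq_sym.
    by move/negbTE => ->; rewrite mulr0.
  rewrite big_split /= !sum_if_eq => /eqP; rewrite addrC addr_eq0 => /eqP ->; by rewrite mulrC.
have sl : c last * q = 0.
  move: sc0; rewrite (bigD1 last) //=.
  rewrite (eq_bigr (fun _ => - (t * c last))); last by move=> j; exact: cj.
  rewrite sumr_const cardC1 card_ord -/m -mulr_natl.
  have -> : q = 1 - m%:R * t by rewrite mt; ring.
  move=> H; rewrite -H; ring.
have cl0 : c last = 0.
  by move/eqP: sl; rewrite mulf_eq0 (gt_eqF q0) orbF => /eqP.
move=> i; case: (eqVneq i last) => [->//|nil].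
by rewrite cj // cl0 mulr0 oppr0.
Qed.

Lemma exists_simplex (R : realType) (d n : nat) (r : R) :
  (2 <= n)%N -> (n <= d.+1)%N -> 0 < r ->
  exists Y : 'I_n -> 'rV[R]_d, regular_simplex Y /\ smallest_circumsphere r Y.
Proof.
move=> n2 nd r0.
have [V [HV HA]] := @raw_simplex R d n n2 nd.
have n0 : (0 < n)%N by apply: ltnW.
pose i0 : 'I_n := Ordinal n0.
have rc := regular_centered n0 HV.
set g := n%:R^-1 *: \sum_j V j in rc.
have hN : (2 : R) <= n%:R by rewrite ler_nat.
have hN1 : (n.-1)%:R = n%:R - 1 :> R by rewrite -subn1 natrB // ltnW.
have nz2n : 2 * n%:R != 0 :> R by rewrite mulf_neq0 // pnatr_eq0 -lt0n.
set K := sqn (V i0 - g).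
have HK i : sqn (V i - g) = K by apply: (mulfI nz2n); rewrite !rc.
have K0 : 0 < K.
  have := rc i0; rewrite -/K hN1 => E.
  have : 0 < 2 * n%:R * K by rewrite E; nra.
  by rewrite pmulr_rgt0 // mulr_gt0 //; lra.
have sK0 : 0 < Num.sqrt K by rewrite sqrtr_gt0.
set a := r / Num.sqrt K.
have a0 : 0 < a by rewrite divr_gt0.
have az : a != 0 by rewrite gt_eqF.
pose Y i := a *: (V i - g).
have sqnY i : sqn (Y i) = r ^+ 2.
  rewrite sqnZ HK /a expr_div_n sqr_sqrtr ?ltW // -mulrA mulVf ?mulr1 //.
  by rewrite gt_eqF.
have YB i j : Y i - Y j = a *: (V i - V j).
  by rewrite /Y -scalerBr; congr (_ *: _); rewrite opprB addrA subrK.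
exists Y; split; [split|split].
- move=> c sc sY; apply: HA => // k.
  have := congr1 (fun M : 'rV[R]_d => M ord0 k) sY; rewrite /= summxE mxE.
  rewrite (eq_bigr (fun i => a * (c i * V i ord0 k) - a * g ord0 k * c i)); last first.
    by move=> i _; rewrite !mxE; ring.
  rewrite sumrB -!mulr_sumr sc mulr0 subr0 => /eqP.
  by rewrite mulf_eq0 (negbTE az) /= => /eqP.
- move=> i j k l nij nkl; rewrite /edist /enorm.
  rewrite -/(sqn (Y i - Y j)) -/(sqn (Y k - Y l)) !YB !sqnZ !HV //.
- by move=> i; rewrite /enorm -/(sqn (Y i)) sqnY sqrtr_sqr ger0_norm // ltW.
- move=> c rho H.
  have HZ k : \sum_i Y i ord0 k = 0.
    rewrite (eq_bigr (fun i => a * (V i - g) ord0 k)); last by move=> i _; rewrite mxE.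
    by rewrite -mulr_sumr centroid_sum // mulr0.
  have := sqn_centered c HZ.
  rewrite (eq_bigr (fun _ => rho ^+ 2)); last by move=> i _; rewrite -edist_sqr H.
  rewrite (eq_bigr (fun _ => r ^+ 2) (fun i _ => sqnY i)) !sumr_const card_ord => E.
  have rho0 : 0 <= rho by rewrite -(H i0); exact: enorm_ge0.
  have sc0 := sqn_ge0 c.
  have : r ^+ 2 <= rho ^+ 2.
    have nN : (0 : R) < n%:R by lra.
    rewrite -(ler_pM2l nN) !mulr_natl E; have := mulr_ge0 (ler0n R n) sc0.
    rewrite mulr_natl; lra.
  nra.
Qed.

Lemma mst_bound (R : realType) (d n : nat) (r : R) : (2 <= n)%N -> 0 < r ->
  forall Y : 'I_n -> 'rV[R]_d, regular_simplex Y -> smallest_circumsphere r Y ->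
  forall X : 'I_n -> 'rV[R]_d, (forall i, enorm (X i) <= r) ->
  (mst_length X <= mst_length Y)%E.
Proof.
move=> n2 r0 Y [_ Hreg] [_ Hsph] X HX.
have n0 : (0 < n)%N by apply: ltnW.
pose i0 : 'I_n := Ordinal n0.
pose i1 : 'I_n := Ordinal n2.
have i01 : i0 != i1 by [].
set s := edist (Y i0) (Y i1).
have s0 : 0 <= s := enorm_ge0 _.
have HD : forall i j, i != j -> sqn (Y i - Y j) = s ^+ 2.
  by move=> i j nij; rewrite -edist_sqr (Hreg i j i0 i1 nij i01).
have rc := regular_centered n0 HD.
set c := n%:R^-1 *: \sum_j Y j in rc.
have hN : (2 : R) <= n%:R by rewrite ler_nat.
have hN1 : (n.-1)%:R = n%:R - 1 :> R by rewrite -subn1 natrB // ltnW.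
have nz2n : 2 * n%:R != 0 :> R by rewrite mulf_neq0 // pnatr_eq0 -lt0n.
have Hall i : sqn (Y i - c) = sqn (Y i0 - c).
  by apply: (mulfI nz2n); rewrite !rc.
have rle : r <= enorm (Y i0 - c).
  apply: Hsph => i; rewrite /edist; exact: (congr1 Num.sqrt (Hall i)).
have KeyY : 2 * n%:R * r ^+ 2 <= (n.-1)%:R * s ^+ 2.
  rewrite -(rc i0) -enorm_sqr.
  have e0 := enorm_ge0 (Y i0 - c).
  set e := enorm (Y i0 - c) in rle e0 *.
  apply: ler_wpM2l; first by apply: mulr_ge0 => //; apply: ler0n.
  nra.
have LY : (((n.-1)%:R * s)%:E <= mst_length Y)%E.
  apply/bigmin_geP; split; first exact: leey.
  move=> G /asboolP [[irr sym] [conn _]].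
  rewrite lee_fin /graph_length.
  rewrite (eq_bigr (fun _ => s)); last first.
    move=> p /andP [_ lt]; apply: Hreg => //; by rewrite neq_ltn lt.
  rewrite sumr_const -[X in _ <= X]mulr_natl; apply: (ler_wpM2r s0); rewrite ler_nat.
  apply: leq_trans (@edges_count n G i0 (conj irr sym) conn) _.
  by rewrite leq_eqVlt; apply/orP; left; apply/eqP; apply: eq_card => p; rewrite inE.
pose L j := \sum_i edist (X j) (X i).
have L0 j : 0 <= L j by apply: sumr_ge0 => i _; exact: enorm_ge0.
have hM : (0 : R) <= (n.-1)%:R := ler0n _ _.
have CS j : L j ^+ 2 <= (n.-1)%:R * \sum_i sqn (X i - X j).
  have -> : L j = \sum_(i in predC1 j) edist (X j) (X i).
    rewrite /L (bigD1 j) //= edist_xx add0r; apply: eq_bigl => i; by rewrite inE.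
  apply: le_trans (cauchy_schwarz _ _) _.
  rewrite cardC1 card_ord; apply: (ler_wpM2l hM).
  rewrite [X in _ <= X](bigD1 j) //= subrr sqn0 add0r le_eqVlt; apply/orP; left; apply/eqP.
  apply: eq_big => [i|i _]; first by rewrite inE.
  by rewrite edist_sym edist_sqr.
have SQ : \sum_k sqn (X k) <= n%:R * r ^+ 2.
  have H k : sqn (X k) <= r ^+ 2.
    rewrite -enorm_sqr; have := HX k; have := enorm_ge0 (X k); nra.
  apply: le_trans (ler_sum _ (fun k _ => H k)) _.
  by rewrite sumr_const card_ord mulr_natl.
have SumL : \sum_j L j ^+ 2 <= (n.-1)%:R * (2 * n%:R * (n%:R * r ^+ 2)).
  apply: le_trans (ler_sum _ (fun j _ => CS j)) _.
  rewrite -mulr_sumr; apply: (ler_wpM2l hM).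
  apply: le_trans (pair_bound X) _.
  apply: ler_wpM2l => //; by apply: mulr_ge0 => //; apply: ler0n.
case: (@arg_minP _ _ _ i0 xpredT L isT) => k _ Hk.
have Lk : n%:R * L k ^+ 2 <= \sum_j L j ^+ 2.
  have H j : L k ^+ 2 <= L j ^+ 2.
    have := Hk j isT; have := L0 k; nra.
  apply: le_trans _ (ler_sum _ (fun j _ => H j)).
  by rewrite sumr_const card_ord mulr_natl.
have Lk2 : L k <= (n.-1)%:R * s.
  have nN : (0 : R) < n%:R by lra.
  have A : L k ^+ 2 <= (n.-1)%:R * (2 * n%:R * r ^+ 2).
    rewrite -(ler_pM2l nN); apply: le_trans Lk _; apply: le_trans SumL _.
    rewrite le_eqVlt; apply/orP; left; apply/eqP; ring.
  have B : (n.-1)%:R * (2 * n%:R * r ^+ 2) <= (n.-1)%:R * ((n.-1)%:R * s ^+ 2).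
    exact: (ler_wpM2l hM).
  have AB := le_trans A B.
  have u0 : 0 <= (n.-1)%:R * s by apply: mulr_ge0.
  have C : L k ^+ 2 <= ((n.-1)%:R * s) ^+ 2.
    apply: le_trans AB _; rewrite le_eqVlt; apply/orP; left; apply/eqP; ring.
  move: C u0; have := L0 k; set u := (n.-1)%:R * s; nra.
apply: le_trans LY.
rewrite /mst_length.
apply: le_trans (bigmin_le_cond _ _ (asboolT (star_spanning k))) _.
by rewrite lee_fin star_length.
Qed.

Theorem theorem1 (R : realType) (d n : nat) (r : R) :
  (1 <= d)%N -> (2 <= n)%N -> (n <= d.+1)%N -> 0 < r ->
  (exists Y : 'I_n -> 'rV[R]_d, regular_simplex Y /\ smallest_circumsphere r Y) /\
  (forall Y : 'I_n -> 'rV[R]_d, regular_simplex Y -> smallest_circumsphere r Y ->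
     forall X : 'I_n -> 'rV[R]_d, injective X -> (forall i, enorm (X i) <= r) ->
       (mst_length X <= mst_length Y)%E).
Proof.
move=> d1 n2 nd r0; split; first exact: exists_simplex.
move=> Y HY HS X _ HX; exact: (mst_bound n2 r0 HY HS HX).
Qed.
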